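(* For any $n,s\in\mathbb{N}$ and every real number $x$, $$\sum_{k=0}^{n-1}\frac{(-1)^k x^{2k}}{(2k+1)^s}=\sum_{k=1}^n(-1)^{k-1}\binom{n}{k}\,{}_{s+1}F_s\left(\{\tfrac12\}^{s},1-k;\{\tfrac32\}^{s};-x^2\right).$$
   Context: $\mathbb{N}$ is the set of positive integers; $\{a\}^s$ denotes $a$ repeated $s$ times. ${}_{s+1}F_s(a_1,\ldots,a_{s+1};b_1,\ldots,b_s;x)=\sum_{i\geq 0}\frac{(a_1)_i\cdots(a_{s+1})_i}{(b_1)_i\cdots(b_s)_i}\frac{x^i}{i!}$, with $(a)_0=1$, $(a)_i=a(a+1)\cdots(a+i-1)$ for $i>0$ (a finite sum here since $1-k\leq 0$ is an integer). *)

(* Defs.v *)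
From mathcomp Require Import all_boot all_order all_algebra.
Set Implicit Arguments. Unset Strict Implicit. Unset Printing Implicit Defensive.
Import Order.TTheory GRing.Theory Num.Theory.
Local Open Scope ring_scope.

Definition poch {R : ringType} (a : R) (i : nat) : R :=
  \prod_(j < i) (a + j%:R).

Definition hyp_term {R : fieldType} (as_ bs : seq R) (x : R) (i : nat) : R :=
  (\prod_(a <- as_) poch a i) / (\prod_(b <- bs) poch b i) * x ^+ i / (i`!)%:R.

(* Terminating generalized hypergeometric series
   _{p+1}F_p(as_, 1-k; bs; x) for k : nat, k >= 1. Since 1-k is a non-positive
   integer, (1-k)_i = 0 for all i >= k, so the series is exactly the finite sum
   over i = 0..k-1. The terminating upper parameter 1-k is placed last. *)
Definition hypF_term {R : fieldType} (as_ : seq R) (k : nat) (bs : seq R) (x : R) : R :=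
  \sum_(i < k) hyp_term (rcons as_ (1 - k%:R)) bs x i.

(* Main.v *)
Require Import Defs.
From mathcomp Require Import all_boot all_order all_algebra ring.
Import Order.TTheory GRing.Theory Num.Theory.
Local Open Scope ring_scope.

Section Aux.
Variable R : realFieldType.

Definition gS (n i : nat) : R :=
  \sum_(j < n.+1) (-1) ^+ j * ('C(n, j) * 'C(j, i))%:R.

Lemma gS_val n : forall i, gS n i = if n == i then (-1) ^+ i else 0.
Proof.
elim: n => [|n IH] i.
  rewrite /gS big_ord_recl big_ord0 addr0 expr0 mul1r bin0 mul1n bin0n.
  by case: i.
have step : gS n.+1 i = gS n i
   + \sum_(j < n.+1) (-1) ^+ j.+1 * ('C(n, j) * 'C(j.+1, i))%:R.
  rewrite /gS big_ord_recl [in RHS]big_ord_recl -addrA; congr (_ + _).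
    by rewrite !bin0.
  under eq_bigr => j _ do rewrite lift0 binS mulnDl natrD mulrDr.
  rewrite big_split /=; congr (_ + _).
  rewrite big_ord_recr /= bin_small // mul0n mulr0 addr0.
  by apply: eq_bigr => j _; rewrite /bump leq0n.
rewrite step; clear step; case: i => [|i].
  under eq_bigr => j _ do rewrite !bin0 exprS mulN1r mulNr.
  rewrite sumrN.
  have -> : \sum_(j < n.+1) (-1) ^+ j * ('C(n, j) * 1)%:R = gS n 0.
    by apply: eq_bigr => j _; rewrite bin0.
  by rewrite subrr.
under eq_bigr => j _ do rewrite binS mulnDr exprS mulN1r mulNr natrD mulrDr.
rewrite sumrN big_split /= opprD addrA.
have -> : \sum_(i0 < n.+1) (-1) ^+ i0 * ('C(n, i0) * 'C(i0, i.+1))%:R = gS n i.+1 by [].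
rewrite subrr add0r.
have -> : \sum_(i0 < n.+1) (-1) ^+ i0 * ('C(n, i0) * 'C(i0, i))%:R = gS n i by [].
rewrite IH eqSS; case: (n == i); last by rewrite oppr0.
by rewrite exprS mulN1r.
Qed.

Definition fS (n i : nat) : R :=
  \sum_(k < n) (-1) ^+ k * ('C(n, k.+1) * 'C(k, i))%:R.

Lemma fS_val n : forall i, fS n i = if (i < n)%N then (-1) ^+ i else 0.
Proof.
elim: n => [|n IH] i.
  by rewrite /fS big_ord0.
have -> : fS n.+1 i = fS n i + gS n i.
  rewrite /fS /gS.
  under eq_bigr => k _ do rewrite binS mulnDl natrD mulrDr.
  rewrite big_split /=; congr (_ + _).
  by rewrite big_ord_recr /= bin_small // mul0n mulr0 addr0.
rewrite IH gS_val ltnS.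
by case: ltngtP => _; rewrite ?addr0 ?add0r.
Qed.


Lemma prod_nseq (G : R -> R) s h : \prod_(a <- nseq s h) G a = G h ^+ s.
Proof. by elim: s => [|s IH]; rewrite ?big_nil ?expr0 // /= big_cons IH exprS. Qed.

Lemma poch_shift (h : R) i : poch h i * (h + i%:R) = h * poch (h + 1) i.
Proof.
elim: i => [|i IH]; first by rewrite /poch !big_ord0 addr0 mulr1 mul1r.
rewrite /poch !big_ord_recr /= -/(poch h i) -/(poch (h+1) i).
rewrite IH -mulrA; congr (_ * (_ * _)).
by rewrite -addn1 natrD; ring.
Qed.

Lemma poch_neg k i : poch (1 - (k.+1)%:R : R) i = (-1) ^+ i * (k ^_ i)%:R.
Proof.
elim: i => [|i IH]; first by rewrite /poch big_ord0 expr0 mul1r.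
rewrite /poch big_ord_recr /= -/(poch _ i) IH ffactnSr natrM exprS.
have [ik|ki] := leqP i k.
  rewrite natrB // -addn1 natrD; ring.
by rewrite ffact_small // !(mul0r,mulr0,mul0n).
Qed.

Lemma poch_gt0 (h : R) i : 0 < h -> 0 < poch h i.
Proof.
move=> hp; rewrite /poch; apply: prodr_gt0 => j _.
by apply: ltr_wpDr.
Qed.

Lemma hyp_val' s k i (x : R) :
  hyp_term (rcons (nseq s 2%:R^-1) (1 - (k.+1)%:R)) (nseq s (3%:R / 2%:R)) (- x ^+ 2) i
  = 'C(k, i)%:R * (x ^+ (2 * i) / (2 * i + 1)%:R ^+ s).
Proof.
rewrite /hyp_term big_rcons /= !prod_nseq poch_neg -bin_ffact.
have h3 : 3%:R / 2%:R = 2%:R^-1 + 1 :> R.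
  by field.
have Qp : 0 < poch (3%:R / 2%:R : R) i.
  by apply: poch_gt0; apply: divr_gt0; rewrite ltr0n.
have PQ : poch (2%:R^-1 : R) i = poch (3%:R / 2%:R) i / (2 * i + 1)%:R.
  have := poch_shift (2%:R^-1 : R) i; rewrite -h3 => E.
  apply: (mulIf (_ : (2%:R^-1 + i%:R : R) != 0)).
    by rewrite gt_eqF // ltr_wpDr // invr_gt0 ltr0n.
  rewrite E natrD natrM.
  field.
  by rewrite gt_eqF // ltr_wpDl ?ltr01 // mulr_ge0 ?ler0n.
rewrite PQ.
set Q := poch _ i.
have Q0 : Q != 0 by rewrite gt_eqF.
rewrite -[X in X / _]mulrA mulrAC.
rewrite expr_div_n.
have -> : - x ^+ 2 = -1 * x ^+ 2 by rewrite mulN1r.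
rewrite exprMn -exprM natrM.
set D := ((2 * i + 1)%:R ^+ s : R).
have D0 : D != 0 by rewrite expf_neq0 // pnatr_eq0 addn1.
have F0 : (i`!)%:R != 0 :> R by rewrite pnatr_eq0 -lt0n fact_gt0.
have q0 : Q ^+ s != 0 by rewrite expf_neq0.
set sg := (-1) ^+ i.
have ss : sg * sg = 1 by rewrite /sg -exprMn mulrNN mulr1 expr1n.
transitivity (sg * sg * ('C(k, i)%:R * (x ^+ (2 * i) / D))).
2: by rewrite ss mul1r.
by field; rewrite D0 F0 q0.
Qed.


End Aux.

Lemma hypF_val (R : realFieldType) (s k : nat) (x : R) :
  hypF_term (nseq s (2%:R^-1)) k.+1 (nseq s (3%:R / 2%:R)) (- x ^+ 2)
  = \sum_(i < k.+1) 'C(k, i)%:R * (x ^+ (2 * i) / (2 * i + 1)%:R ^+ s).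
Proof. by apply: eq_bigr => i _; apply: hyp_val'. Qed.

Theorem lemma3p3 (R : realFieldType) (n s : nat) (x : R) :
  (0 < n)%N -> (0 < s)%N ->
  \sum_(k < n) (-1) ^+ k * x ^+ (2 * k) / (2 * k + 1)%:R ^+ s
  = \sum_(1 <= k < n.+1)
      (-1) ^+ (k - 1) * 'C(n, k)%:R *
      hypF_term (nseq s (2%:R^-1)) k (nseq s (3%:R / 2%:R)) (- x ^+ 2).
Proof.
move=> n0 s0.
pose a := fun i : nat => x ^+ (2 * i) / (2 * i + 1)%:R ^+ s.
have -> : \sum_(k < n) (-1) ^+ k * x ^+ (2 * k) / (2 * k + 1)%:R ^+ s
   = \sum_(i < n) (-1) ^+ i * a i.
  by apply: eq_bigr => i _; rewrite /a mulrA.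
rewrite big_add1 /= big_mkord.
have E : forall k : 'I_n, (-1) ^+ (k.+1 - 1) * 'C(n, k.+1)%:R *
    hypF_term (nseq s (2%:R^-1)) k.+1 (nseq s (3%:R / 2%:R)) (- x ^+ 2)
  = \sum_(i < n) (-1) ^+ k * ('C(n, k.+1) * 'C(k, i))%:R * a i.
  move=> k; rewrite subn1 /= hypF_val.
  rewrite (big_ord_widen n (fun i => 'C(k, i)%:R * a i)) ?ltn_ord // big_mkcond.
  rewrite big_distrr /=; apply: eq_bigr => i _.
  case: ifP => h; first by rewrite /a natrM; ring.
  have ki : (k < i)%N by rewrite ltnNge -ltnS h.
  by rewrite (bin_small ki) muln0 !(mulr0,mul0r).
rewrite (eq_bigr _ (fun k _ => E k)) exchange_big /=.
apply: eq_bigr => i _.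
rewrite -big_distrl /=.
have -> : \sum_(k < n) (-1) ^+ k * ('C(n, k.+1) * 'C(k, i))%:R = fS R n i by [].
by rewrite fS_val ltn_ord.
Qed.
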